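(* For cycles we have $f^-(C_3)=f^-(C_5)=0$, and for every odd $n\ge 7$, $f^-(C_n)=n-5$.
   Context: All graphs are finite, simple, undirected and connected. $N[v]=N(v)\cup\{v\}$ is the closed neighbourhood. A chromatic colouring of $G$ is a proper vertex colouring $c:V(G)\to\{c_1,\dots,c_{\chi(G)}\}$. With respect to $c$, a vertex $v$ yields a rainbow neighbourhood if $N[v]$ contains a vertex of each colour $c_1,\dots,c_{\chi(G)}$; $r_\chi(G)$ is the number of such vertices, and $r^-_\chi(G)$, $r^+_\chi(G)$ are its minimum and maximum over all chromatic colourings of $G$. Fading: for a set $F\subseteq V(G)$ (a fade set), the vertices of $F$ receive a transparent colour $c^\circ$ not among $c_1,\dots,c_{\chi(G)}$; after fading, $v$ yields a rainbow neighbourhood iff for every $i$ some vertex of $N[v]\setminus F$ has colour $c_i$. The fading number $f^-(G)$ is the maximum $|F|$ over chromatic colourings $c$ attaining $r_\chi=r^-_\chi(G)$ and fade sets $F$ such that, after fading $F$, the number of vertices yielding rainbow neighbourhoods is still $r^-_\chi(G)$; $f^+(G)$ is defined analogously with $r^+_\chi(G)$. *)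

(* Defs.v *)
From mathcomp Require Import all_boot.
Set Implicit Arguments. Unset Strict Implicit. Unset Printing Implicit Defensive.

(* A graph is a relation e on a finite type (the paper's graphs are simple:
   e symmetric and irreflexive; the cycles below are such graphs). *)
Section Fading.
Variables (T : finType) (e : rel T).

Definition proper_col (k : nat) (c : {ffun T -> 'I_k}) : bool :=
  [forall x, forall y, e x y ==> (c x != c y)].

Definition colorable (k : nat) : bool := [exists c : {ffun T -> 'I_k}, proper_col c].

Definition chi : nat := \big[minn/#|T|]_(k < #|T|.+1 | colorable k) (k : nat).

Definition closed_nbr (v u : T) : bool := (u == v) || e v u.

Definition rainbow (c : {ffun T -> 'I_chi}) (F : {set T}) (v : T) : bool :=
  [forall i : 'I_chi, [exists u, [&& closed_nbr v u, u \notin F & c u == i]]].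

Definition r_count (c : {ffun T -> 'I_chi}) (F : {set T}) : nat :=
  #|[set v | rainbow c F v]|.

Definition r_minus : nat :=
  \big[minn/#|T|]_(c : {ffun T -> 'I_chi} | proper_col c) r_count c set0.

Definition f_minus : nat :=
  \max_(c : {ffun T -> 'I_chi} | proper_col c && (r_count c set0 == r_minus))
    \max_(F : {set T} | r_count c F == r_minus) #|F|.
End Fading.

Definition cycle_rel (n : nat) : rel 'I_n :=
  fun i j => (val j == (val i).+1 %% n) || (val i == (val j).+1 %% n).
Arguments cycle_rel n : clear implicits.

(* Main.v *)
Require Import Defs.
From mathcomp Require Import all_boot zify.
Set Implicit Arguments. Unset Strict Implicit. Unset Printing Implicit Defensive.

Section Gen.
Variables (T : finType) (e : rel T).
Definition rbw k (c : {ffun T -> 'I_k}) (F : {set T}) (v : T) : bool :=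
  [forall i : 'I_k, [exists u, [&& closed_nbr e v u, u \notin F & c u == i]]].
Definition rc k (c : {ffun T -> 'I_k}) (F : {set T}) : nat := #|[set v | rbw c F v]|.
Definition rm k : nat := \big[minn/#|T|]_(c : {ffun T -> 'I_k} | proper_col e c) rc c set0.
Definition fm k : nat :=
  \max_(c : {ffun T -> 'I_k} | proper_col e c && (rc c set0 == rm k))
    \max_(F : {set T} | rc c F == rm k) #|F|.
Lemma f_minusE : f_minus e = fm (chi e).
Proof. by []. Qed.
End Gen.

Lemma bigmin_le (I : finType) (P : pred I) (F : I -> nat) x j :
  P j -> \big[minn/x]_(i | P i) F i <= F j.
Proof.
move=> Pj; rewrite -big_filter.
have : j \in [seq i <- index_enum I | P i] by rewrite mem_filter Pj mem_index_enum.
elim: [seq i <- index_enum I | P i] => //= a l IH; rewrite in_cons big_cons.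
case/orP => [/eqP <-|/IH H]; first exact: geq_minl.
exact: leq_trans (geq_minr _ _) H.
Qed.

Lemma rbw_mono (T : finType) (e : rel T) k (c : {ffun T -> 'I_k}) F v :
  rbw e c F v -> rbw e c set0 v.
Proof.
move=> /forallP H; apply/forallP => i; have /existsP [u /and3P [H1 _ H3]] := H i.
by apply/existsP; exists u; rewrite H1 inE H3.
Qed.

Lemma cardU1le (T : finType) (A : {set T}) x : #|A :|: [set x]| <= #|A|.+1.
Proof. by apply: leq_trans (leq_card_setU _ _) _; rewrite cards1 addn1. Qed.

Section Cyc.
Variable n : nat.
Local Notation s := (@ordS n).
Local Notation p := (@ord_pred n).
Local Notation E := (cycle_rel n).

Lemma vS (i : 'I_n) : val (s i) = if i.+1 == n then 0 else i.+1.
Proof.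
rewrite /= ; case: eqP => [->|H]; first by rewrite modnn.
by rewrite modn_small //; move: (ltn_ord i) H; lia.
Qed.

Lemma vP (i : 'I_n) : val (p i) = if val i == 0 then n.-1 else (val i).-1.
Proof.
have Hi := ltn_ord i.
rewrite /=; case: eqP => [->|H]; first by rewrite add0n modn_small //; lia.
have -> : (i + n).-1 = (i.-1) + n by lia.
by rewrite modnDr modn_small //; lia.
Qed.

Lemma E_s (u v : 'I_n) : E u v = (v == s u) || (v == p u).
Proof.
rewrite /cycle_rel -[v == s u]val_eqE /=; congr (_ || _).
apply/eqP/eqP => [H|->].
  have -> : u = s v by apply: val_inj; rewrite /= H.
  by rewrite ordSK.
by rewrite -[_ %% n]/(val (s (p u))) ord_predK.
Qed.

Lemma cn_s (v u : 'I_n) : closed_nbr E v u = [|| u == p v, u == v | u == s v].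
Proof. by rewrite /closed_nbr E_s; case: (u == p v); case: (u == v); case: (u == s v). Qed.

Lemma E_sx (x : 'I_n) : E x (s x).
Proof. by rewrite E_s eqxx. Qed.

Lemma proper_s k (c : {ffun 'I_n -> 'I_k}) : proper_col E c -> forall x, c x != c (s x).
Proof. by move=> /forallP H x; move/forallP: (H x) => /(_ (s x)); rewrite E_sx. Qed.

Lemma proper_sP k (c : {ffun 'I_n -> 'I_k}) : (forall x, c x != c (s x)) -> proper_col E c.
Proof.
move=> H; apply/forallP => x; apply/forallP => y; apply/implyP.
rewrite E_s => /orP [/eqP -> | /eqP ->]; first exact: H.
by rewrite -{1}(ord_predK x) eq_sym H.
Qed.

Hypothesis n3 : 3 <= n.

Lemma dist3 (v : 'I_n) : [/\ p v != v, v != s v & p v != s v].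
Proof.
rewrite -!val_eqE vP vS; have := ltn_ord v.
case: v => [v Hv] /= _.
by case: ifP => /eqP ?; case: ifP => /eqP ?; split; apply/eqP; lia.
Qed.

Hypothesis nodd : odd n.

Lemma no2 (c : {ffun 'I_n -> 'I_2}) : ~~ proper_col E c.
Proof.
apply/negP => /proper_s H.
have n0 : 0 < n by lia.
pose x0 : 'I_n := Ordinal n0.
have key : forall m (Hm : m < n), val (c (Ordinal Hm)) = (c x0 + m) %% 2.
  elim => [Hm|m IH Hm].
    have -> : Ordinal Hm = x0 by apply: val_inj.
    by rewrite addn0 modn_small.
  have Hm' : m < n by lia.
  have -> : Ordinal Hm = s (Ordinal Hm').
    by apply: val_inj; rewrite vS /=; case: ifP => /eqP; lia.
  have := H (Ordinal Hm'); rewrite -val_eqE IH.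
  by move: (c (s (Ordinal Hm'))) (c x0) => [a Ha] [b Hb] /=; lia.
have nl : n.-1 < n by lia.
have sx : s (Ordinal nl) = x0 by apply: val_inj; rewrite vS /=; case: ifP => /eqP; lia.
have := H (Ordinal nl); rewrite sx -val_eqE key.
by move: (c x0) => [b Hb] /=; lia.
Qed.

Lemma col_widen k (c : {ffun 'I_n -> 'I_k}) (Hk : k <= 2) :
  proper_col E c -> colorable E 2.
Proof.
move=> /proper_s H; apply/existsP; exists [ffun x => widen_ord Hk (c x)].
apply: proper_sP => x; rewrite !ffunE -!val_eqE /=; rewrite val_eqE; exact: H.
Qed.

Definition col0 (i : 'I_n) : nat := if val i == n.-1 then 2 else val i %% 2.
Definition c0 : {ffun 'I_n -> 'I_3} := [ffun i => inord (col0 i)].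

Lemma c0E i : val (c0 i) = col0 i.
Proof. by rewrite ffunE /= inordK // /col0; case: ifP => _ //; rewrite ltnS; have := ltn_pmod i (isT : 0 < 2); lia. Qed.

Lemma c0_proper : proper_col E c0.
Proof.
apply: proper_sP => x; rewrite -val_eqE !c0E /col0 vS.
case: x => [x Hx] /=.
have [h1|h1] := boolP (x.+1 == n); rewrite ?h1 ?(negbTE h1); move: h1 => /eqP h1;
by apply/eqP; repeat (case: ifP => /eqP ?); lia.
Qed.

Lemma chi3 : chi E = 3.
Proof.
rewrite /chi card_ord.
have h3 : 3 < n.+1 by lia.
apply/eqP; rewrite eqn_leq; apply/andP; split.
  apply: (@bigmin_le _ _ (fun k : 'I_n.+1 => val k) _ (Ordinal h3)).
  by apply/existsP; exists c0; exact: c0_proper.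
elim/big_ind: _ => //; first by move=> x y; rewrite leq_min => -> ->.
move=> i /existsP [c Hc]; rewrite leqNgt; apply/negP => Hi.
by move: (col_widen Hi Hc) => /existsP [c' Hc']; move: (no2 c'); rewrite Hc'.
Qed.

Lemma nocover (a b : 'I_3) : (forall i : 'I_3, (i == a) || (i == b)) -> False.
Proof.
move=> H; move: (H (inord 0)) (H (inord 1)) (H (inord 2)).
rewrite -!val_eqE /= !inordK //; case: a b {H} => [a Ha] [b Hb] /=; lia.
Qed.

Lemma cover3 (a b c i : 'I_3) : a != b -> b != c -> a != c -> [|| i == a, i == b | i == c].
Proof.
rewrite -!val_eqE /=; move: (ltn_ord a) (ltn_ord b) (ltn_ord c) (ltn_ord i).
case: a b c i => [a ?] [b ?] [c ?] [i ?] /=. lia.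
Qed.

Lemma rbwE (c : {ffun 'I_n -> 'I_3}) F v : proper_col E c ->
  rbw E c F v = [&& c (p v) != c (s v), p v \notin F, v \notin F & s v \notin F].
Proof.
move=> Hc; have Hs := proper_s Hc.
have Hpv : c (p v) != c v by have := Hs (p v); rewrite ord_predK.
have Hvs := Hs v.
have [D1 D2 D3] := dist3 v.
apply/idP/idP.
  move=> /forallP H.
  have K : forall i, [|| (p v \notin F) && (c (p v) == i), (v \notin F) && (c v == i)
                        | (s v \notin F) && (c (s v) == i)].
    move=> i; have /existsP [u /and3P [Hu HF Hci]] := H i; rewrite cn_s in Hu.
    by case/or3P: Hu => /eqP ?; subst u; rewrite HF Hci ?orbT.
  apply/and4P; split.
  - apply/negP => /eqP Heq; apply: (@nocover (c v) (c (s v))) => i.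
    by case/or3P: (K i) => /andP [_ /eqP <-]; rewrite ?Heq eqxx ?orbT.
  - apply/negP => Hp; apply: (@nocover (c v) (c (s v))) => i.
    case/or3P: (K i) => /andP [H1 /eqP <-]; rewrite ?eqxx ?orbT //.
    by rewrite Hp in H1.
  - apply/negP => Hp; apply: (@nocover (c (p v)) (c (s v))) => i.
    case/or3P: (K i) => /andP [H1 /eqP <-]; rewrite ?eqxx ?orbT //.
    by rewrite Hp in H1.
  - apply/negP => Hp; apply: (@nocover (c (p v)) (c v)) => i.
    case/or3P: (K i) => /andP [H1 /eqP <-]; rewrite ?eqxx ?orbT //.
    by rewrite Hp in H1.
case/and4P => H0 H1 H2 H3; apply/forallP => i.
case/or3P: (cover3 i Hpv Hvs H0) => /eqP ->; apply/existsP.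
- by exists (p v); rewrite cn_s eqxx H1 eqxx.
- by exists v; rewrite cn_s eqxx orbT H2 eqxx.
- by exists (s v); rewrite cn_s eqxx !orbT H3 eqxx.
Qed.

Section Lower.
Variable c : {ffun 'I_n -> 'I_3}.
Hypothesis Hc : proper_col E c.

Definition up (i : 'I_n) : bool := val (c (s i)) == (val (c i)).+1 %% 3.

Lemma upE i : val (c (s i)) = (c i + (1 + ~~ up i)) %% 3.
Proof.
have := proper_s Hc i; rewrite /up -val_eqE.
move: (c i) (c (s i)) => [x Hx] [y Hy] /=.
by case: eqP => /= H1 H2; lia.
Qed.

Lemma rbw_up i : rbw E c set0 (s i) = (up i == up (s i)).
Proof.
rewrite rbwE // !inE /= !andbT ordSK.
have := upE i; have := upE (s i); rewrite -val_eqE.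
move: (up i) (up (s i)) => u1 u2.
move: (c i) (c (s i)) (c (s (s i))) => [x Hx] [y Hy] [z Hz] /=.
by case: u1; case: u2 => /= H1 H2; case: eqP => ? //=; lia.
Qed.

Lemma sum_bool (b : pred 'I_n) : \sum_i (b i : nat) = #|[set i | b i]|.
Proof.
rewrite cardsE -sum1_card.
by rewrite [RHS]big_mkcond; apply: eq_bigr => i _; rewrite unfold_in; case: (b i).
Qed.

Lemma dvd3 : 3 %| n + #|[set i | ~~ up i]|.
Proof.
have H1 : \sum_i (val (c i) + (1 + ~~ up i)) =
          \sum_i ((val (c i) + (1 + ~~ up i)) %/ 3 * 3) + \sum_i val (c (s i)).
  rewrite -big_split /=; apply: eq_bigr => i _; rewrite upE; exact: divn_eq.
have H2 : \sum_i val (c (s i)) = \sum_i val (c i).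
  by rewrite [RHS](reindex_inj (@ordS_inj n)).
rewrite big_split /= H2 big_split /= sum_bool in H1.
have H3 : \sum_(i : 'I_n) 1 = n by rewrite sum1_card card_ord.
rewrite H3 in H1.
apply/dvdnP; exists (\sum_i ((val (c i) + (1 + ~~ up i)) %/ 3)).
rewrite big_distrl /=; by move/eqP: H1; rewrite addnC eqn_add2r => /eqP.
Qed.

Lemma lower3 : 3 <= rc E c set0.
Proof.
pose U := [set i | up i].
pose S := s @^-1: U.
pose R := [set v | rbw E c set0 v].
have hR : #|R| = #|s @^-1: R| by rewrite card_preimset //; exact: ordS_inj.
have hS : #|S| = #|U| by rewrite card_preimset //; exact: ordS_inj.
have hB : #|[set i | ~~ up i]| = #|~: U|.
  by have -> : [set i | ~~ up i] = ~: U by apply/setP => i; rewrite !inE.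
have hC := cardsC U; rewrite card_ord in hC.
have h1 := cardsID S U.
have h2 := cardsID U S.
rewrite setIC in h2.
have h3 := cardsID S (~: U).
have e1 : ~: U :&: S = S :\: U by rewrite setDE setIC.
rewrite e1 in h3.
have h4 := cardsID U (s @^-1: R).
have e2 : (s @^-1: R) :&: U = U :&: S.
  apply/setP => i; rewrite !inE rbw_up; by case: (up i); case: (up (s i)).
have e3 : (s @^-1: R) :\: U = ~: U :\: S.
  apply/setP => i; rewrite !inE rbw_up; by case: (up i); case: (up (s i)).
rewrite e2 e3 in h4.
have hd := dvd3; rewrite hB in hd.
rewrite /rc -/R hR -h4.
lia.
Qed.

End Lower.

Lemma closure (X : {set 'I_n}) x : x \in X -> (forall y, y \in X -> s y \in X) ->
  forall z, z \in X.
Proof.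
move=> Hx HX z.
have Hv : forall k, val (iter k s x) = (x + k) %% n.
  elim => [|k IH]; first by rewrite addn0 modn_small.
  by rewrite iterS /= IH -addn1 modnDml; congr (_ %% _); lia.
have Hi : forall k, iter k s x \in X by elim => //= k IH; exact: HX.
have -> : z = iter (z + n - x) s x.
  apply: val_inj; rewrite Hv.
  have -> : x + (z + n - x) = z + n by move: (ltn_ord x); lia.
  by rewrite modnDr modn_small.
exact: Hi.
Qed.

Lemma bnd_s (X : {set 'I_n}) x z : x \in X -> z \notin X ->
  exists2 y, y \in X & s y \notin X.
Proof.
move=> Hx Hz; case: (boolP [exists y in X, s y \notin X]) => [/exists_inP [y] H1 H2|].
  by exists y.
move=> /exists_inPn H; have := closure Hx; move/(_ _) => H'.
by rewrite H' in Hz => // y Hy; move: (H y Hy); rewrite negbK.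
Qed.

Lemma bnd_p (X : {set 'I_n}) x z : x \in X -> z \notin X ->
  exists2 y, y \in X & p y \notin X.
Proof.
move=> Hx Hz; have [u Hu Hsu] : exists2 u, u \in ~: X & s u \notin ~: X.
  by apply: (@bnd_s _ z x); rewrite !inE ?negbK.
by exists (s u); rewrite ?ordSK; move: Hu Hsu; rewrite !inE ?negbK.
Qed.

Lemma coverG (R G : {set 'I_n}) : 3 <= #|R| ->
  (forall v, v \in R -> [&& p v \in G, v \in G & s v \in G]) -> minn n 5 <= #|G|.
Proof.
move=> HR HG.
have allG : (forall z, z \in G) -> minn n 5 <= #|G|.
  move=> H; have : [set: 'I_n] \subset G by apply/subsetP => z _; exact: H.
  move/subset_leq_card; rewrite cardsT card_ord; lia.
have [x xR] : exists x, x \in R by apply/card_gt0P; lia.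
case: (boolP [forall z, z \in R]) => [/forallP H|/forallPn [z zR]].
  by apply: allG => z; have /and3P [_ -> _] := HG z (H z).
have [x1 x1R sx1] := bnd_s xR zR.
pose R1 := [set y | (y \in R) || (p y \in R)].
have R1G : forall y, y \in R1 -> y \in G.
  move=> y; rewrite inE => /orP [/HG /and3P [_ -> _] //|/HG /and3P [_ _]].
  by rewrite ord_predK.
have RR1 : R \subset R1 by apply/subsetP => y yR; rewrite inE yR.
have c1 : #|R| + 1 <= #|R1|.
  have : s x1 |: R \subset R1.
    by apply/subsetP => y; rewrite !inE => /orP [/eqP ->|->]; rewrite ?ordSK ?x1R ?orbT.
  by move/subset_leq_card; rewrite cardsU1 sx1 add1n addn1.
case: (boolP [forall z, z \in R1]) => [/forallP H|/forallPn [z1 zR1]].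
  by apply: allG => w; exact: R1G.
have x1R1 : x1 \in R1 by rewrite inE x1R.
have [y yR1 pyR1] := bnd_p x1R1 zR1.
have yR : y \in R.
  by move: yR1 pyR1; rewrite !inE => /orP [->|->] //; rewrite orbT.
have : p y |: R1 \subset G.
  apply/subsetP => w; rewrite !inE => /orP [/eqP ->|]; first by have /and3P [-> _ _] := HG y yR.
  by move=> H; apply: R1G; rewrite inE.
move/subset_leq_card; rewrite cardsU1 pyR1 add1n => H.
apply: leq_trans (geq_minr _ _) _; apply: leq_trans H; rewrite ltnS.
by apply: leq_trans _ c1; rewrite addn1 ltnS.
Qed.

Lemma rm_ge3 : 3 <= rm E 3.
Proof.
rewrite /rm; elim/big_ind: _; first by rewrite card_ord.
  by move=> x y; rewrite leq_min => -> ->.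
by move=> c Hc; exact: lower3.
Qed.

Lemma fade_bound (c : {ffun 'I_n -> 'I_3}) F : proper_col E c ->
  rc E c F = rc E c set0 -> #|F| <= n - minn n 5.
Proof.
move=> Hc HF.
pose R := [set v | rbw E c set0 v].
pose RF := [set v | rbw E c F v].
have sub : RF \subset R by apply/subsetP => v; rewrite !inE; exact: rbw_mono.
have eqRF : RF = R.
  by apply/eqP; rewrite eqEcard sub /=; move: HF; rewrite /rc -/R -/RF => ->.
have HG : forall v, v \in R -> [&& p v \in ~: F, v \in ~: F & s v \in ~: F].
  move=> v; rewrite -eqRF inE rbwE // => /and4P [_ h1 h2 h3].
  by rewrite !inE h1 h2 h3.
have := coverG (lower3 Hc) HG.
have := cardsC F; rewrite card_ord.
clearbody R RF => h1 h2; apply: (@leq_trans (#|F| + #|~: F| - minn n 5)); last by rewrite h1.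
by rewrite -addnBA // leq_addr.
Qed.

Lemma n0 : 0 < n. Proof. lia. Qed.
Lemma nl : n.-1 < n. Proof. lia. Qed.
Definition x0 : 'I_n := Ordinal n0.
Definition xl : 'I_n := Ordinal nl.

Lemma vxm : val (p xl) = n.-2.
Proof. by rewrite vP /=; case: ifP => /eqP; lia. Qed.

Lemma c0_rbw v : rbw E c0 set0 v -> v \in [set x0; xl; p xl].
Proof.
rewrite rbwE ?c0_proper // => /and4P [H _ _ _]; move: H.
rewrite -val_eqE !c0E /col0 !inE -!val_eqE vxm vP vS /=.
case: v => [v Hv] /=.
case: v Hv => [|v] Hv /=.
  by repeat (case: ifP => /eqP ?); lia.
case: (boolP (v.+2 == n)) => h; rewrite ?h ?(negbTE h) /=; move/eqP: h => h;
by repeat (case: ifP => /eqP ?); lia.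
Qed.

Lemma card3 (a b d : 'I_n) : #|[set a; b; d]| <= 3.
Proof.
apply: leq_trans (cardU1le _ _) _; rewrite cards2; by case: (a != b).
Qed.

Lemma rc_c0 : rc E c0 set0 <= 3.
Proof.
apply: leq_trans (card3 x0 xl (p xl)).
by apply: subset_leq_card; apply/subsetP => v; rewrite inE; exact: c0_rbw.
Qed.

Lemma c0_keep (F : {set 'I_n}) v : 7 <= n ->
  (forall u, u \in F -> (2 <= val u) && (val u <= n - 4)) ->
  [|| val v == 0, val v == n.-1 | val v == n.-2] -> rbw E c0 F v.
Proof.
move=> n7 HF Hv; rewrite rbwE ?c0_proper //.
have nF : forall u, ~~ ((2 <= val u) && (val u <= n - 4)) -> u \notin F.
  by move=> u H; apply/negP => /HF; rewrite (negbTE H).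
move: Hv; rewrite -val_eqE !c0E /col0.
have e1 := vP v; have e2 := vS v.
have h1 : ~~ ((2 <= val (p v)) && (val (p v) <= n - 4)) -> p v \notin F := @nF (p v).
have h2 : ~~ ((2 <= val v) && (val v <= n - 4)) -> v \notin F := @nF v.
have h3 : ~~ ((2 <= val (s v)) && (val (s v) <= n - 4)) -> s v \notin F := @nF (s v).
move: h1 h2 h3 e1 e2.
case: (p v \in F); case: (v \in F); case: (s v \in F);
move: (p v) (s v) => [a Ha] [b Hb]; case: v => [v Hv] /=;
by repeat (case: ifP => /eqP ?); lia.
Qed.

End Cyc.
Section C2.
Variable n : nat.
Local Notation s := (@ordS n).
Local Notation p := (@ord_pred n).
Local Notation E := (cycle_rel n).
Hypothesis n3 : 3 <= n.
Hypothesis nodd : odd n.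

Lemma rm3 : rm E 3 = 3.
Proof.
have h1 := rm_ge3 n3 nodd.
have h2 : rm E 3 <= rc E (c0 n) set0.
  exact: (@bigmin_le _ (fun c => proper_col E c) (fun c => rc E c set0) #|{:'I_n}| (c0 n) (c0_proper n3 nodd)).
have h3 := rc_c0 n3 nodd.
by apply: anti_leq; rewrite (leq_trans h2 h3) h1.
Qed.

Lemma fm_le : fm E 3 <= n - minn n 5.
Proof.
apply/bigmax_leqP => c /andP [Hc /eqP Hr]; apply/bigmax_leqP => F /eqP HF.
by apply: (fade_bound n3 nodd Hc); rewrite HF Hr.
Qed.

Lemma card3eq (a b d : 'I_n) : a != b -> a != d -> b != d -> #|[set a; b; d]| = 3.
Proof.
move=> h1 h2 h3; rewrite setUC cardsU1 cards2 !inE h1 (eq_sym d a) (eq_sym d b).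
by rewrite (negbTE h2) (negbTE h3).
Qed.

Lemma rc0 : rc E (c0 n) set0 = 3.
Proof.
apply: anti_leq; rewrite (rc_c0 n3 nodd).
exact: (lower3 n3 nodd (c0_proper n3 nodd)).
Qed.

Hypothesis n7 : 7 <= n.

Definition F0 : {set 'I_n} := [set v : 'I_n | (2 <= val v) && (val v <= n - 4)].

Lemma vpp : val (p (p (xl n3 nodd))) = n - 3.
Proof. by rewrite vP (vxm n3 nodd) /=; case: ifP => /eqP; lia. Qed.
Lemma vs0 : val (s (x0 n3 nodd)) = 1.
Proof. by rewrite vS /=; case: ifP => /eqP; lia. Qed.

Lemma F0card : n - 5 <= #|F0|.
Proof.
have sub : ~: F0 \subset [set x0 n3 nodd; s (x0 n3 nodd); p (p (xl n3 nodd)); p (xl n3 nodd); xl n3 nodd].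
  apply/subsetP => v; rewrite !inE -!val_eqE vpp vs0 (vxm n3 nodd) /=.
  by case: v => [v Hv] /=; lia.
have c5 := subset_leq_card sub.
have c5' : #|[set x0 n3 nodd; s (x0 n3 nodd); p (p (xl n3 nodd)); p (xl n3 nodd); xl n3 nodd]| <= 5.
  apply: leq_trans (cardU1le _ _) _; rewrite ltnS.
  apply: leq_trans (cardU1le _ _) _; rewrite ltnS.
  apply: leq_trans (cardU1le _ _) _; rewrite ltnS.
  by rewrite cards2; case: (_ != _).
have hC := cardsC F0; rewrite card_ord in hC.
rewrite leq_subLR -{1}hC addnC leq_add2r.
exact: leq_trans c5 c5'.
Qed.

Lemma rcF0 : rc E (c0 n) F0 = 3.
Proof.
apply: anti_leq; apply/andP; split.
  apply: (leq_trans _ (eq_leq rc0)); apply: subset_leq_card; apply/subsetP => v; rewrite !inE.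
  exact: rbw_mono.
have [D1 D2 D3] := dist3 n3 (xl n3 nodd).
have e3 : #|[set x0 n3 nodd; xl n3 nodd; p (xl n3 nodd)]| = 3.
  apply: card3eq; last by rewrite eq_sym.
  - by rewrite -val_eqE /=; lia.
  - by rewrite -val_eqE (vxm n3 nodd) /=; lia.
apply: (leq_trans (eq_leq (esym e3))).
apply: subset_leq_card; apply/subsetP => v.
rewrite !inE -!val_eqE (vxm n3 nodd) /= => Hv.
apply: (c0_keep n3 nodd) => //; first by move=> u; rewrite inE.
by move: Hv; case: v => [v ?] /=; lia.
Qed.

Lemma fm_ge : n - 5 <= fm E 3.
Proof.
have hc : proper_col E (c0 n) && (rc E (c0 n) set0 == rm E 3).
  by rewrite (c0_proper n3 nodd) rc0 rm3.
apply: leq_trans _ (@leq_bigmax_cond _ _ (fun c => \max_(F | rc E c F == rm E 3) #|F|) (c0 n) hc).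
apply: leq_trans F0card _.
apply: (@leq_bigmax_cond _ (fun F => rc E (c0 n) F == rm E 3) (fun F => #|F|) F0).
by rewrite rcF0 rm3.
Qed.
End C2.

Lemma fmain n : 3 <= n -> odd n -> f_minus (cycle_rel n) = fm (cycle_rel n) 3.
Proof. by move=> n3 nodd; rewrite f_minusE (chi3 n3 nodd). Qed.

Theorem proposition2p2 :
  f_minus (cycle_rel 3) = 0 /\ f_minus (cycle_rel 5) = 0 /\
  (forall n : nat, odd n -> 7 <= n -> f_minus (cycle_rel n) = n - 5).
Proof.
split; [|split].
- rewrite fmain //; apply/eqP; rewrite -leqn0.
  exact: (@fm_le 3 isT isT).
- rewrite fmain //; apply/eqP; rewrite -leqn0.
  exact: (@fm_le 5 isT isT).
- move=> n nodd n7; have n3 : 3 <= n by apply: leq_trans n7.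
  rewrite fmain //; apply: anti_leq; rewrite (fm_ge n3 nodd n7) andbT.
  have := fm_le n3 nodd; have -> : minn n 5 = 5 by apply/minn_idPr; apply: leq_trans n7.
  by [].
Qed.
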